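(* Let $0<\lambda,\lambda'<1$ and $0<\beta,\beta'<1$. Then $\mathcal{B}'(\lambda',\beta')\cong\mathcal{B}'(\lambda,\beta)$ as $\mathbb{R}$-algebras if and only if $\lambda'=\lambda$ and $\beta'\in\{\beta,1-\beta\}$. In particular, two algebras with $(\lambda',\beta')\neq(\lambda,\beta)$ are isomorphic if and only if $\lambda'=\lambda$ and $\beta'=1-\beta$.
   Context: For real parameters $0<\lambda<1$ and $0<\beta<1$, $\mathcal{B}'(\lambda,\beta)$ denotes the commutative (non-associative) $4$-dimensional real algebra with basis $\{o,a,b,c\}$ whose bilinear commutative multiplication $\circ$ is determined by $o\circ o=o$, $o\circ a=\lambda a$, $o\circ b=\lambda b$, $a\circ a=a$, $b\circ b=b$, $a\circ b=\frac{\lambda-\beta}{\lambda}a+\frac{\lambda+\beta-1}{\lambda}b+c$, and $c\circ x=x\circ c=0$ for every $x$. (In the paper the basis vector $c$ is written $ab$.) *)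

(* Defs.v *)
From Stdlib Require Import Reals Lra.
Open Scope R_scope.

(* Elements of the 4-dimensional real vector space with basis {o,a,b,c},
   written in coordinates. *)
Record V4 : Type := mkV4 { co : R ; ca : R ; cb : R ; cc : R }.

Definition vzero : V4 := mkV4 0 0 0 0.
Definition vadd (x y : V4) : V4 :=
  mkV4 (co x + co y) (ca x + ca y) (cb x + cb y) (cc x + cc y).
Definition vscale (t : R) (x : V4) : V4 :=
  mkV4 (t * co x) (t * ca x) (t * cb x) (t * cc x).

Inductive idx : Type := Io | Ia | Ib | Ic.

Definition coord (x : V4) (i : idx) : R :=
  match i with Io => co x | Ia => ca x | Ib => cb x | Ic => cc x end.

(* Multiplication table of B'(lambda,beta) on basis vectors. *)
Definition tbl (lam bet : R) (i j : idx) : V4 :=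
  match i, j with
  | Io, Io => mkV4 1 0 0 0
  | Io, Ia | Ia, Io => mkV4 0 lam 0 0
  | Io, Ib | Ib, Io => mkV4 0 0 lam 0
  | Ia, Ia => mkV4 0 1 0 0
  | Ib, Ib => mkV4 0 0 1 0
  | Ia, Ib | Ib, Ia =>
      mkV4 0 ((lam - bet) / lam) ((lam + bet - 1) / lam) 1
  | Ic, _ | _, Ic => vzero
  end.

Definition all_idx : list idx := Io :: Ia :: Ib :: Ic :: nil.

Definition bmul (lam bet : R) (x y : V4) : V4 :=
  List.fold_right vadd vzero
    (List.flat_map (fun i =>
       List.map (fun j => vscale (coord x i * coord y j) (tbl lam bet i j))
                all_idx) all_idx).

Definition alg_iso (lam1 bet1 lam2 bet2 : R) (f : V4 -> V4) : Prop :=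
  (forall x y, f (vadd x y) = vadd (f x) (f y)) /\
  (forall t x, f (vscale t x) = vscale t (f x)) /\
  (forall x y, f x = f y -> x = y) /\
  (forall y, exists x, f x = y) /\
  (forall x y, f (bmul lam1 bet1 x y) = bmul lam2 bet2 (f x) (f y)).

Definition B'_isomorphic (lam1 bet1 lam2 bet2 : R) : Prop :=
  exists f : V4 -> V4, alg_iso lam1 bet1 lam2 bet2 f.

(* Main.v *)
Require Import Defs.
From Stdlib Require Import Reals Lra.
Open Scope R_scope.

Lemma bmul_eq lam bet x y : bmul lam bet x y = mkV4 (co x*co y)
  (lam*(co x*ca y+ca x*co y) + ca x*ca y + (lam-bet)/lam*(ca x*cb y+cb x*ca y))
  (lam*(co x*cb y + cb x*co y) + cb x*cb y + (lam+bet-1)/lam*(ca x*cb y + cb x*ca y))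
  (ca x*cb y+cb x*ca y).
Proof. destruct x, y; unfold bmul, vadd, vscale, vzero; simpl; f_equal; ring. Qed.

Definition eo := mkV4 1 0 0 0. Definition ea := mkV4 0 1 0 0.
Definition eb := mkV4 0 0 1 0. Definition ec := mkV4 0 0 0 1.

Lemma fdec f : (forall x y, f (vadd x y) = vadd (f x) (f y)) ->
  (forall t x, f (vscale t x) = vscale t (f x)) -> forall x,
  f x = mkV4 (co x * co (f eo) + ca x * co (f ea) + cb x * co (f eb) + cc x * co (f ec))
             (co x * ca (f eo) + ca x * ca (f ea) + cb x * ca (f eb) + cc x * ca (f ec))
             (co x * cb (f eo) + ca x * cb (f ea) + cb x * cb (f eb) + cc x * cb (f ec))
             (co x * cc (f eo) + ca x * cc (f ea) + cb x * cc (f eb) + cc x * cc (f ec)).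
Proof.
  intros Ha Hs x.
  assert (E : x = vadd (vscale (co x) eo) (vadd (vscale (ca x) ea) (vadd (vscale (cb x) eb) (vscale (cc x) ec)))).
  { destruct x; unfold vadd, vscale, eo, ea, eb, ec; simpl; f_equal; ring. }
  rewrite E at 1. rewrite !Ha, !Hs. unfold vadd, vscale; simpl. f_equal; ring.
Qed.

Ltac geteq Ha Hs Hm u v H :=
  pose proof (Hm u v) as H;
  rewrite (fdec _ Ha Hs (bmul _ _ u v)) in H;
  rewrite !bmul_eq in H; simpl in H.

Lemma idem01 x : x = x^2 -> x = 0 \/ x = 1.
Proof. intros. destruct (Req_dec x 0); [left|right]; auto.
  apply Rmult_eq_reg_l with x; auto. nra. Qed.
Lemma mul0l x y : x * y = 0 -> x <> 0 -> y = 0.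
Proof. intros H n. destruct (Rmult_integral _ _ H); tauto. Qed.
Lemma idem2 x y k : x = x^2 + 2*x*k*y -> x*y = 0 -> x = 0 \/ x = 1.
Proof. intros H1 H2. apply idem01. replace (2*x*k*y) with (2*k*(x*y)) in H1 by ring. rewrite H2 in H1. lra. Qed.
Lemma p1val p l : p = p^2 + 2*p*l -> p <> 0 -> p = 1 - 2*l.
Proof. intros H n. apply Rmult_eq_reg_l with p; auto. nra. Qed.

Lemma forward lam bet lam' bet' f :
  0 < lam < 1 -> 0 < lam' < 1 -> 0 < bet < 1 -> 0 < bet' < 1 ->
  alg_iso lam' bet' lam bet f -> lam' = lam /\ (bet' = bet \/ bet' = 1 - bet).
Proof.
  intros Hl Hl' Hb Hb' [Ha [Hs [Hi [Hsu Hm]]]].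
  pose proof (fdec f Ha Hs) as FD.
  geteq Ha Hs Hm eo eo Hoo.
  geteq Ha Hs Hm eo ea Hoa.
  geteq Ha Hs Hm eo eb Hob.
  geteq Ha Hs Hm ea ea Haa.
  geteq Ha Hs Hm eb eb Hbb.
  geteq Ha Hs Hm ea eb Hab.
  geteq Ha Hs Hm ec eo Hco.
  destruct (Hsu eo) as [xo Ho]. destruct (Hsu ea) as [xa Hxa]. destruct (Hsu eb) as [xb Hxb].
  pose proof (Hm ec xo) as Hc. rewrite Ho in Hc.
  rewrite FD in Ho, Hxa, Hxb, Hc.
  rewrite !bmul_eq in Hc. rewrite FD in Hc.
  simpl in Hc.
  set (k1 := (lam - bet)/lam) in *. set (k2 := (lam + bet - 1)/lam) in *.
  set (k1' := (lam' - bet')/lam') in *. set (k2' := (lam' + bet' - 1)/lam') in *.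
  assert (K1 : k1 * lam = lam - bet) by (unfold k1; field; lra).
  assert (K2 : k2 * lam = lam + bet - 1) by (unfold k2; field; lra).
  assert (K1' : k1' * lam' = lam' - bet') by (unfold k1'; field; lra).
  assert (K2' : k2' * lam' = lam' + bet' - 1) by (unfold k2'; field; lra).
  clearbody k1 k2 k1' k2'.
  set (P := f eo) in *. set (Q := f ea) in *. set (S := f eb) in *. set (T := f ec) in *.
  destruct P as [P0 P1 P2 P3], Q as [Q0 Q1 Q2 Q3], S as [S0 S1 S2 S3], T as [T0 T1 T2 T3].
  simpl in *.
  injection Hoo; injection Hoa; injection Hob; injection Haa; injection Hbb; injection Hab; injection Hc;
  injection Ho; injection Hxa; injection Hxb; intros.
  clear Hoo Hoa Hob Haa Hbb Hab Hc Ho Hxa Hxb Hco Hm Hi Hsu FD Ha Hs.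
  repeat match goal with H : _ = _ |- _ => progress ring_simplify in H end.
  assert (T1z : T1 = 0) by nra. assert (T2z : T2 = 0) by nra. subst T0 T1 T2.
  assert (P01 : P0 = 0 \/ P0 = 1) by (apply idem01; auto).
  assert (Q0z : Q0 = 0).
  { destruct (idem01 Q0 H26) as [e|e]; auto. subst Q0. exfalso; destruct P01; subst; lra. }
  assert (S0z : S0 = 0).
  { destruct (idem01 S0 H22) as [e|e]; auto. subst S0. exfalso; destruct P01; subst; lra. }
  subst Q0 S0.
  assert (P0o : P0 = 1) by (destruct P01; auto; subst; lra). subst P0.
  assert (cxa : co xa = 0) by lra. assert (cxb : co xb = 0) by lra.
  rewrite cxa in *. rewrite cxb in *.
  set (x1 := ca xa) in *. set (x2 := cb xa) in *. set (y1 := ca xb) in *. set (y2 := cb xb) in *.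
  set (m11 := lam + P1 + k1*P2). set (m12 := k1*P1). set (m21 := k2*P2). set (m22 := lam+P2+k2*P1).
  assert (EQ1 : m11*Q1 + m12*Q2 = lam'*Q1) by (rewrite H33; unfold m11, m12; ring).
  assert (ES1 : m11*S1 + m12*S2 = lam'*S1) by (rewrite H29; unfold m11, m12; ring).
  assert (EQ2 : m21*Q1 + m22*Q2 = lam'*Q2) by (rewrite H32; unfold m21, m22; ring).
  assert (ES2 : m21*S1 + m22*S2 = lam'*S2) by (rewrite H28; unfold m21, m22; ring).
  assert (V1 : x1*Q1 + x2*S1 = 1) by lra. assert (V2 : x1*Q2 + x2*S2 = 0) by lra.
  assert (W1 : y1*Q1 + y2*S1 = 0) by lra. assert (W2 : y1*Q2 + y2*S2 = 1) by lra.
  assert (M11 : m11 = lam').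
  { assert (E : m11 - lam' = x1*(m11*Q1+m12*Q2-lam'*Q1) + x2*(m11*S1+m12*S2-lam'*S1)
        + (m11-lam')*(1 - (x1*Q1+x2*S1)) - m12*(x1*Q2+x2*S2)) by ring.
    rewrite EQ1, ES1, V1, V2 in E. lra. }
  assert (M12 : m12 = 0).
  { assert (E : m12 = y1*(m11*Q1+m12*Q2-lam'*Q1) + y2*(m11*S1+m12*S2-lam'*S1)
        - (m11-lam')*(y1*Q1+y2*S1) + m12*(1 - (y1*Q2+y2*S2))) by ring.
    rewrite EQ1, ES1, W1, W2 in E. lra. }
  assert (M21 : m21 = 0).
  { assert (E : m21 = x1*(m21*Q1+m22*Q2-lam'*Q2) + x2*(m21*S1+m22*S2-lam'*S2)
        + m21*(1 - (x1*Q1+x2*S1)) - (m22-lam')*(x1*Q2+x2*S2)) by ring.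
    rewrite EQ2, ES2, V1, V2 in E. lra. }
  assert (M22 : m22 = lam').
  { assert (E : m22 - lam' = y1*(m21*Q1+m22*Q2-lam'*Q2) + y2*(m21*S1+m22*S2-lam'*S2)
        - m21*(y1*Q1+y2*S1) + (m22-lam')*(1 - (y1*Q2+y2*S2))) by ring.
    rewrite EQ2, ES2, W1, W2 in E. lra. }
  unfold m11, m12, m21, m22 in *.
  assert (P1z : P1 = 0).
  { destruct (Req_dec P1 0) as [e|n]; auto. exfalso.
    assert (k1z : k1 = 0) by (apply (mul0l P1); [rewrite Rmult_comm|]; auto).
    subst k1.
    assert (P1v : P1 = 1 - 2*lam) by (apply p1val; auto; rewrite H37 at 1; ring).
    destruct (Req_dec P2 0) as [e2|n2].
    - subst P2. assert (k2 * P1 = 1 * P1) by lra.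
      assert (k2 = 1) by (apply Rmult_eq_reg_r with P1; auto). subst k2. lra.
    - assert (k2z : k2 = 0) by (apply (mul0l P2); [rewrite Rmult_comm|]; auto). subst k2. lra. }
  subst P1.
  assert (P2z : P2 = 0).
  { destruct (Req_dec P2 0) as [e|n]; auto. exfalso.
    assert (k2z : k2 = 0) by (apply (mul0l P2); [rewrite Rmult_comm|]; auto). subst k2.
    assert (k1 * P2 = 1 * P2) by lra.
    assert (k1 = 1) by (apply Rmult_eq_reg_r with P2; auto). subst k1. lra. }
  subst P2.
  assert (LL : lam' = lam) by lra. rewrite LL in *. clear LL.
  assert (Q3z : Q3 = 0) by (apply (mul0l lam); lra).
  assert (S3z : S3 = 0) by (apply (mul0l lam); lra). subst Q3 S3.
  assert (QQ : Q1 * Q2 = 0) by lra. assert (SS : S1 * S2 = 0) by lra.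
  assert (Q1v : Q1 = 0 \/ Q1 = 1) by (apply (idem2 Q1 Q2 k1); auto; rewrite H25 at 1; ring).
  assert (Q2v : Q2 = 0 \/ Q2 = 1) by (apply (idem2 Q2 Q1 k2); [rewrite H24 at 1; ring| rewrite Rmult_comm; auto]).
  assert (S1v : S1 = 0 \/ S1 = 1) by (apply (idem2 S1 S2 k1); auto; rewrite H21 at 1; ring).
  assert (S2v : S2 = 0 \/ S2 = 1) by (apply (idem2 S2 S1 k2); [rewrite H20 at 1; ring| rewrite Rmult_comm; auto]).
  split; [reflexivity|].
  destruct Q1v, Q2v, S1v, S2v; subst Q1 Q2 S1 S2; try lra.
  - right. assert (E : k1 = k2') by lra. subst k1. lra.
  - left. assert (E : k1 = k1') by lra. subst k1. lra.
Qed.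

Lemma id_iso lam bet : alg_iso lam bet lam bet (fun x => x).
Proof. repeat split; auto. intros y; exists y; auto. Qed.

Lemma swap_iso lam bet : 0 < lam -> alg_iso lam (1 - bet) lam bet
  (fun x => mkV4 (co x) (cb x) (ca x) (cc x)).
Proof.
  intros Hl. unfold alg_iso. split; [|split; [|split; [|split]]].
  - intros [] []; reflexivity.
  - intros t []; reflexivity.
  - intros [a b c d] [a0 b0 c0 d0] H; simpl in H; injection H; intros; subst; reflexivity.
  - intros [a b c d]; exists (mkV4 a c b d); reflexivity.
  - intros [] []; rewrite !bmul_eq; simpl; f_equal; field; lra.
Qed.

Theorem mainTheorem9 (lam bet lam' bet' : R) :
  0 < lam < 1 -> 0 < lam' < 1 -> 0 < bet < 1 -> 0 < bet' < 1 ->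
  (B'_isomorphic lam' bet' lam bet <->
     (lam' = lam /\ (bet' = bet \/ bet' = 1 - bet))) /\
  ((lam', bet') <> (lam, bet) ->
     (B'_isomorphic lam' bet' lam bet <-> (lam' = lam /\ bet' = 1 - bet))).
Proof.
  intros H1 H2 H3 H4.
  assert (E : B'_isomorphic lam' bet' lam bet <->
     (lam' = lam /\ (bet' = bet \/ bet' = 1 - bet))).
  { split.
    - intros [f Hf]. exact (forward lam bet lam' bet' f H1 H2 H3 H4 Hf).
    - intros [-> [-> | ->]].
      + exists (fun x => x). apply id_iso.
      + eexists. apply swap_iso. lra. }
  split; auto.
  intros Hne. rewrite E. split.
  - intros [-> [-> | ->]]; [exfalso; apply Hne; reflexivity| auto].
  - intros [-> ->]; auto.
Qed.
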